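(* Let $\mathcal{L}=(R_i:i<k)$ be a finite relational language, $K$ a Fraïssé class of finite $\mathcal{L}$-structures with the Strong Amalgamation Property, $T$ the theory of its Fraïssé limit, and $N=(A,B)$ a monster model of $T_{pfc}$ (with $A$ the universe of sort $O$ and $B$ of sort $P$). For $j=1,\dots,n$ let $\phi_j(x,y_j,z_j)$ be $\mathcal{L}_{pfc}$-formulas where $x$ is a single variable of sort $O$, $y_j$ is a tuple of variables of sort $O$, and $z_j$ is a single variable of sort $P$; let $a_j$ be tuples from $A$ and let $b_1,\dots,b_n\in B$ be pairwise distinct. If each $\phi_j(x,a_j,b_j)$ is non-algebraic (has infinitely many realizations in $N$), then the conjunction $\bigwedge_{j=1}^n\phi_j(x,a_j,b_j)$ is non-algebraic.
   Context: $K$ has SAP if for all $A,B,C\in K$ and embeddings $e:A\to B$, $f:A\to C$ there are $D\in K$ and embeddings $g:B\to D$, $h:C\to D$ with $ge=hf$ and $\mathrm{im}(g)\cap\mathrm{im}(h)=\mathrm{im}(ge)$. If $R_i$ has arity $n_i$, $\mathcal{L}_{pfc}$ is the two-sorted language with sorts $O$ and $P$ and relation symbols $R^i_x(x,y_1,\dots,y_{n_i})$ with $x$ of sort $P$ and $y_1,\dots,y_{n_i}$ of sort $O$. For an $\mathcal{L}_{pfc}$-structure $M=(A,B)$ and $b\in B$, $A_b$ is the $\mathcal{L}$-structure with domain $A$ in which $R_i$ is interpreted as $\{\bar y: R^i(b,\bar y)\}$. $K_{pfc}$ is the class of finite $\mathcal{L}_{pfc}$-structures $(A,B)$ such that $A_b$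 is isomorphic to a member of $K$ for every $b\in B$; it is a Fraïssé class with SAP, and $T_{pfc}$ is the theory of its Fraïssé limit (it has quantifier elimination). *)

(* Defs.v *)
From HB Require Import structures.
From Stdlib Require Lists.List.
From mathcomp Require Import all_boot.

Set Implicit Arguments.
Unset Strict Implicit.
Unset Printing Implicit Defensive.

Section PFC.
(* The finite relational language L = (R_i : i < k), R_i of arity ar i. *)
Variable k : nat.
Variable ar : 'I_k -> nat.

Definition Lrel (C : Type) := forall i : 'I_k, (ar i).-tuple C -> Prop.

Definition L_embedding (C D : Type) (RC : Lrel C) (RD : Lrel D) (f : C -> D) : Prop :=
  injective f /\ forall i (ys : (ar i).-tuple C), RC i ys <-> RD i (map_tuple f ys).

Definition L_iso (C D : Type) (RC : Lrel C) (RD : Lrel D) (f : C -> D) : Prop :=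
  L_embedding RC RD f /\ bijective f.

Definition Lclass := forall C : finType, Lrel C -> Prop.

Definition iso_closed (K : Lclass) : Prop :=
  forall (C D : finType) (RC : Lrel C) (RD : Lrel D) (f : C -> D),
    K C RC -> L_iso RC RD f -> K D RD.

Definition HP (K : Lclass) : Prop :=
  forall (C D : finType) (RC : Lrel C) (RD : Lrel D) (f : C -> D),
    K D RD -> L_embedding RC RD f -> K C RC.

Definition JEP (K : Lclass) : Prop :=
  forall (B C : finType) (RB : Lrel B) (RC : Lrel C), K B RB -> K C RC ->
  exists (D : finType) (RD : Lrel D) (g : B -> D) (h : C -> D),
    [/\ K D RD, L_embedding RB RD g & L_embedding RC RD h].

Definition AP (K : Lclass) : Prop :=
  forall (A B C : finType) (RA : Lrel A) (RB : Lrel B) (RC : Lrel C)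
         (e : A -> B) (f : A -> C),
    K A RA -> K B RB -> K C RC -> L_embedding RA RB e -> L_embedding RA RC f ->
  exists (D : finType) (RD : Lrel D) (g : B -> D) (h : C -> D),
    [/\ K D RD, L_embedding RB RD g, L_embedding RC RD h
      & forall x, g (e x) = h (f x)].

Definition SAP (K : Lclass) : Prop :=
  forall (A B C : finType) (RA : Lrel A) (RB : Lrel B) (RC : Lrel C)
         (e : A -> B) (f : A -> C),
    K A RA -> K B RB -> K C RC -> L_embedding RA RB e -> L_embedding RA RC f ->
  exists (D : finType) (RD : Lrel D) (g : B -> D) (h : C -> D),
    [/\ K D RD, L_embedding RB RD g, L_embedding RC RD h,
        forall x, g (e x) = h (f x)
      & forall y z, g y = h z -> exists x, g (e x) = g y].

(* Fraisse class (Hodges): nonempty, closed under isomorphism, HP, JEP, AP.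
   (Countably many isomorphism types is automatic for a finite relational language.) *)
Definition fraisse_class (K : Lclass) : Prop :=
  [/\ exists (C : finType) (RC : Lrel C), K C RC, iso_closed K, HP K, JEP K & AP K].

(* relations R^i(x; y_1..y_{n_i}) with x of sort P, y's of sort O *)
Definition Prel (C D : Type) := forall i : 'I_k, D -> (ar i).-tuple C -> Prop.

Record pfc_struct := PfcStruct {
  sortO : Type;
  sortP : Type;
  prel : Prel sortO sortP }.

Definition pfc_embedding (C1 D1 C2 D2 : Type) (R1 : Prel C1 D1) (R2 : Prel C2 D2)
    (fO : C1 -> C2) (fP : D1 -> D2) : Prop :=
  [/\ injective fO, injective fP &
      forall i (d : D1) (ys : (ar i).-tuple C1), R1 i d ys <-> R2 i (fP d) (map_tuple fO ys)].

Definition pfc_automorphism (M : pfc_struct) (sO : sortO M -> sortO M)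
    (sP : sortP M -> sortP M) : Prop :=
  [/\ bijective sO, bijective sP & pfc_embedding (@prel M) (@prel M) sO sP].

Definition fiber (C D : Type) (R : Prel C D) (b : D) : Lrel C := fun i ys => R i b ys.

Definition Kpfc (K : Lclass) (C D : finType) (R : Prel C D) : Prop :=
  forall b : D, exists (C' : finType) (R' : Lrel C') (f : C -> C'),
    K C' R' /\ L_iso (fiber R b) R' f.

Definition countable_type (T : Type) : Prop := exists f : T -> nat, injective f.

Definition is_pfc_fraisse_limit (K : Lclass) (M : pfc_struct) : Prop :=
  [/\ countable_type (sortO M), countable_type (sortP M),
      (forall (C D : finType) (R : Prel C D),
          Kpfc K R <-> exists fO fP, pfc_embedding R (@prel M) fO fP) &
      (forall (C D : finType) (R : Prel C D) fO fP gO gP,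
          pfc_embedding R (@prel M) fO fP -> pfc_embedding R (@prel M) gO gP ->
          exists sO sP, [/\ @pfc_automorphism M sO sP,
                            forall c, sO (fO c) = gO c &
                            forall d, sP (fP d) = gP d])].

(* Variables are named by nat, in two separate namespaces (sort O and sort P). *)
Inductive pform : Type :=
  | PRel (i : 'I_k) (z : nat) (ys : (ar i).-tuple nat)
  | PEqO (u v : nat)
  | PEqP (u v : nat)
  | PNot (f : pform)
  | PAnd (f g : pform)
  | PExO (v : nat) (f : pform)
  | PExP (v : nat) (f : pform).

Definition upd (T : Type) (e : nat -> T) (v : nat) (x : T) : nat -> T :=
  fun u => if u == v then x else e u.

Fixpoint psat (M : pfc_struct) (eO : nat -> sortO M) (eP : nat -> sortP M)
    (f : pform) : Prop :=
  match f with
  | PRel i z ys => @prel M i (eP z) (map_tuple eO ys)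
  | PEqO u v => eO u = eO v
  | PEqP u v => eP u = eP v
  | PNot g => ~ psat eO eP g
  | PAnd g h => psat eO eP g /\ psat eO eP h
  | PExO v g => exists x, psat (upd eO v x) eP g
  | PExP v g => exists y, psat eO (upd eP v y) g
  end.

(* M and N satisfy the same sentences (= universal closures of formulas) *)
Definition elem_equiv (M N : pfc_struct) : Prop :=
  forall f : pform,
    (forall eO eP, psat (M:=M) eO eP f) <-> (forall eO eP, psat (M:=N) eO eP f).

Definition model_of_Tpfc (K : Lclass) (N : pfc_struct) : Prop :=
  exists M0 : pfc_struct, is_pfc_fraisse_limit K M0 /\ elem_equiv N M0.

End PFC.

Definition finite_pred (T : Type) (P : T -> Prop) : Prop :=
  exists s : seq T, forall x, P x -> List.In x s.

Definition infinite_pred (T : Type) (P : T -> Prop) : Prop := ~ finite_pred P.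

(* Main.v *)
Require Import Defs.
From HB Require Import structures.
From mathcomp Require Import all_boot.
From Stdlib Require Import Classical ClassicalEpsilon FunctionalExtensionality.
Set Implicit Arguments. Unset Strict Implicit. Unset Printing Implicit Defensive.

Section Syn.
Variables (k : nat) (ar : 'I_k -> nat).

Fixpoint rename (ro rp : nat -> nat) (f : pform ar) : pform ar :=
 match f with
 | @PRel _ _ i z ys => @PRel _ ar i (rp z) (map_tuple ro ys)
 | PEqO u v => PEqO ar (ro u) (ro v)
 | PEqP u v => PEqP ar (rp u) (rp v)
 | PNot g => PNot (rename ro rp g)
 | PAnd g h => PAnd (rename ro rp g) (rename ro rp h)
 | PExO v g => PExO (ro v) (rename ro rp g)
 | PExP v g => PExP (rp v) (rename ro rp g)
 end.

Fixpoint fvO (f : pform ar) : seq nat :=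
 match f with
 | @PRel _ _ _ _ ys => val ys
 | PEqO u v => [:: u; v]
 | PEqP _ _ => [::]
 | PNot g => fvO g
 | PAnd g h => fvO g ++ fvO h
 | PExO v g => [seq u <- fvO g | u != v]
 | PExP _ g => fvO g
 end.

Fixpoint fvP (f : pform ar) : seq nat :=
 match f with
 | @PRel _ _ _ z _ => [:: z]
 | PEqO _ _ => [::]
 | PEqP u v => [:: u; v]
 | PNot g => fvP g
 | PAnd g h => fvP g ++ fvP h
 | PExO _ g => fvP g
 | PExP v g => [seq u <- fvP g | u != v]
 end.

Lemma map_tuple_comp (A B C : Type) m (f : A -> B) (g : B -> C) (t : m.-tuple A) :
  map_tuple g (map_tuple f t) = map_tuple (g \o f) t.
Proof. by apply: val_inj => /=; rewrite map_comp. Qed.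

Lemma upd_comp (T : Type) (e : nat -> T) (ro : nat -> nat) (hro : injective ro) v x :
  (upd e (ro v) x) \o ro = upd (e \o ro) v x.
Proof.
apply: functional_extensionality => u; rewrite /upd /=.
by rewrite (inj_eq hro).
Qed.

Lemma psat_rename (M : pfc_struct ar) ro rp (hro : injective ro) (hrp : injective rp)
  (f : pform ar) (eO : nat -> sortO M) (eP : nat -> sortP M) :
  psat eO eP (rename ro rp f) <-> psat (eO \o ro) (eP \o rp) f.
Proof.
elim: f eO eP => [i z ys|u v|u v|g IH|g IHg h IHh|v g IH|v g IH] eO eP /=.
- by rewrite map_tuple_comp.
- by [].
- by [].
- by rewrite IH.
- by rewrite IHg IHh.
- split=> [[x Hx]|[x Hx]]; exists x.
  + by rewrite -upd_comp //; apply/IH.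
  + by apply/IH; rewrite upd_comp.
- split=> [[x Hx]|[x Hx]]; exists x.
  + by rewrite -upd_comp //; apply/IH.
  + by apply/IH; rewrite upd_comp.
Qed.

Lemma psat_agree (M : pfc_struct ar) (f : pform ar) (eO eO' : nat -> sortO M)
  (eP eP' : nat -> sortP M) :
  {in fvO f, eO =1 eO'} -> {in fvP f, eP =1 eP'} ->
  (psat eO eP f <-> psat eO' eP' f).
Proof.
elim: f eO eO' eP eP' => [i z ys|u v|u v|g IH|g IHg h IHh|v g IH|v g IH]
   eO eO' eP eP' HO HP /=.
- rewrite HP ?mem_head //.
  have -> : map_tuple eO ys = map_tuple eO' ys.
    by apply: val_inj => /=; apply/eq_in_map => u hu; apply: HO.
  by [].
- by rewrite !HO ?mem_head ?inE ?eqxx ?orbT.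
- by rewrite !HP ?mem_head ?inE ?eqxx ?orbT.
- by rewrite (IH eO eO' eP eP').
- rewrite (IHg eO eO' eP eP'); last 2 first.
    by move=> u hu; apply: HO; rewrite mem_cat hu.
    by move=> u hu; apply: HP; rewrite mem_cat hu.
  rewrite (IHh eO eO' eP eP') //.
    by move=> u hu; apply: HO; rewrite mem_cat hu orbT.
  by move=> u hu; apply: HP; rewrite mem_cat hu orbT.
- have H : forall x, psat (upd eO v x) eP g <-> psat (upd eO' v x) eP' g.
    move=> x; apply: IH => // u hu; rewrite /upd.
    case: eqP => // /eqP ne; apply: HO; by rewrite mem_filter ne.
  by split=> [[x Hx]|[x Hx]]; exists x; apply/H.
- have H : forall x, psat eO (upd eP v x) g <-> psat eO' (upd eP' v x) g.
    move=> x; apply: IH => // u hu; rewrite /upd.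
    case: eqP => // /eqP ne; apply: HP; by rewrite mem_filter ne.
  by split=> [[x Hx]|[x Hx]]; exists x; apply/H.
Qed.

Lemma psat_auto (M : pfc_struct ar) sO sP (Ha : pfc_automorphism sO sP)
  (f : pform ar) (eO : nat -> sortO M) (eP : nat -> sortP M) :
  psat (sO \o eO) (sP \o eP) f <-> psat eO eP f.
Proof.
case: Ha => [[gO sOK gOK] [gP sPK gPK] [iO iP Hr]].
elim: f eO eP => [i z ys|u v|u v|g IH|g IHg h IHh|v g IH|v g IH] eO eP /=.
- by rewrite -map_tuple_comp; symmetry; apply: Hr.
- by split=> [/iO|->].
- by split=> [/iP|->].
- by rewrite IH.
- by rewrite IHg IHh.
- have E : forall y, upd (sO \o eO) v (sO y) = sO \o upd eO v y.
    by move=> y; apply: functional_extensionality => u; rewrite /upd /=; case: eqP.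
  split=> [[x Hx]|[y Hy]].
  + exists (gO x); apply/IH; rewrite -E gOK //.
  + by exists (sO y); rewrite E; apply/IH.
- have E : forall y, upd (sP \o eP) v (sP y) = sP \o upd eP v y.
    by move=> y; apply: functional_extensionality => u; rewrite /upd /=; case: eqP.
  split=> [[x Hx]|[y Hy]].
  + exists (gP x); apply/IH; rewrite -E gPK //.
  + by exists (sP y); rewrite E; apply/IH.
Qed.

Definition Ptrue : pform ar := PEqO ar 0 0.
Definition bigand (T : Type) (g : T -> pform ar) (s : seq T) : pform ar :=
  foldr (fun x acc => PAnd (g x) acc) Ptrue s.

Lemma psat_bigand (M : pfc_struct ar) (T : eqType) (g : T -> pform ar) s
  (eO : nat -> sortO M) (eP : nat -> sortP M) :
  psat eO eP (bigand g s) <-> forall x, x \in s -> psat eO eP (g x).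
Proof.
elim: s => [|y s IH] /=; first by split.
rewrite IH; split=> [[H1 H2] x|H].
  by rewrite inE => /orP [/eqP->|/H2].
by split; [apply: H; rewrite mem_head | move=> x hx; apply: H; rewrite inE hx orbT].
Qed.

End Syn.

Section M0.
Variables (k : nat) (ar : 'I_k -> nat) (K : Lclass ar) (M : pfc_struct ar)
  (HM : is_pfc_fraisse_limit K M).

Lemma emb_auto (C D : Type) (R : Prel ar C D) fO fP sO sP :
  pfc_embedding R (@prel _ _ M) fO fP -> pfc_automorphism sO sP ->
  pfc_embedding R (@prel _ _ M) (sO \o fO) (sP \o fP).
Proof.
case=> iO iP Hr [_ _ [jO jP Hs]]; split.
- exact: inj_comp.
- exact: inj_comp.
- by move=> i dd ys; rewrite Hr Hs map_tuple_comp.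
Qed.

Lemma ext_lemma n (phi : 'I_n -> pform ar) (a' : 'I_n -> nat -> sortO M)
  (x : 'I_n -> sortO M) (b' : 'I_n -> sortP M) (hb' : injective b')
  (cs : seq (sortO M)) (d : sortO M) :
  (forall j, psat (upd (a' j) 0 (x j)) (fun _ => b' j) (phi j)) ->
  (forall j i, i < size cs -> x j <> nth d cs i) ->
  (forall j l v, v \in fvO (phi l) -> v != 0 -> x j <> a' l v) ->
  exists y, (forall j, psat (upd (a' j) 0 y) (fun _ => b' j) (phi j)) /\
            (forall i, i < size cs -> y <> nth d cs i).
Proof.
move=> Hx Hcs Ha.
case: HM => [[cf cfi] _ Hage Hhom].
pose eT := inj_type cfi.
pose F : seq eT := cs ++ flatten [seq [seq (a' l v : eT) | v <- [seq v <- fvO (phi l) | v != 0]]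
                                 | l <- enum 'I_n].
pose U := undup F. pose m := size U.
pose ev (i : 'I_m) : sortO M := nth (d : eT) U i.
have ev_inj : injective ev.
  move=> i j Hij.
  have : (nth (d : eT) U i == nth (d : eT) U j) by apply/eqP.
  by rewrite nth_uniq ?undup_uniq // => /eqP; apply: val_inj.
have memF : forall y : eT, y \in F -> exists i : 'I_m, ev i = y.
  move=> y; rewrite -mem_undup => hy.
  have hi : index y U < m by rewrite index_mem.
  by exists (Ordinal hi); rewrite /ev /= nth_index.
have Fcases : forall i : 'I_m,
   (exists i', i' < size cs /\ ev i = nth d cs i') \/
   (exists l v, [/\ v \in fvO (phi l), v != 0 & ev i = a' l v]).
  move=> i.
  have : (ev i : eT) \in F by rewrite -mem_undup /ev mem_nth.
  rewrite mem_cat => /orP [hc|].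
    left; exists (index (ev i : eT) cs); split; first by rewrite index_mem.
    by rewrite (nth_index (d : eT) hc).
  move=> /flattenP [s0 /mapP [l _ ->] /mapP [v]].
  rewrite mem_filter => /andP [hv0 hv] ->.
  by right; exists l, v.
have xnot : forall j (i : 'I_m), ev i <> x j.
  move=> j i; case: (Fcases i) => [[i' [hi' ->]]|[l [v [hv hv0 ->]]]] E.
    exact: (Hcs j i' hi' (esym E)).
  exact: (Ha j l v hv hv0 (esym E)).
pose piT (j : 'I_n) (o : option 'I_m) : sortO M :=
  match o with Some i => ev i | None => x j end.
have piT_inj : forall j, injective (piT j).
  move=> j [i|] [i'|] //= E.
  - by rewrite (ev_inj _ _ E).
  - by case: (xnot j i).
  - by case: (xnot j i'); rewrite E.
pose RT : Prel ar (option 'I_m) 'I_n :=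
  fun i j ys => @prel _ _ M i (b' j) (map_tuple (piT j) ys).
pose RT0 : Prel ar 'I_m 'I_n := fun i j ys => @prel _ _ M i (b' j) (map_tuple ev ys).
pose RU (j : 'I_n) : Prel ar (option 'I_m) unit :=
  fun i _ ys => @prel _ _ M i (b' j) (map_tuple (piT j) ys).
have embU : forall j, pfc_embedding (RU j) (@prel _ _ M) (piT j) (fun _ => b' j).
  by move=> j; split; [apply: piT_inj | by move=> [] [] | by []].
have KT : Kpfc K RT.
  move=> j.
  have := (proj2 (Hage _ _ (RU j)) (ex_intro _ _ (ex_intro _ _ (embU j))) tt).
  by [].
have [fO [fP embT]] := proj1 (Hage _ _ RT) KT.
have emb0 : pfc_embedding RT0 (@prel _ _ M) ev b'.
  by split.
have emb1 : pfc_embedding RT0 (@prel _ _ M) (fO \o Some) fP.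
  case: embT => iO iP Hr; split.
  - by apply: inj_comp => // ? ? [].
  - exact: iP.
  - move=> i j ys; have := Hr i j (map_tuple Some ys).
    by rewrite /RT !map_tuple_comp.
have [sO [sP [Hauto HsO HsP]]] := Hhom _ _ _ _ _ _ _ emb1 emb0.
have embT' := emb_auto embT Hauto.
pose y := sO (fO None).
exists y; split; last first.
  move=> i hi E.
  have hin : (nth d cs i : eT) \in F by rewrite mem_cat mem_nth.
  have [i0 Ei0] := memF _ hin.
  have : (sO \o fO) None = (sO \o fO) (Some i0).
    by rewrite /= HsO Ei0 -E.
  by case: embT' => + _ _ => /[apply].
move=> j.
have emb2 : pfc_embedding (RU j) (@prel _ _ M) (sO \o fO) (fun _ => b' j).
  case: embT' => iO _ Hr; split => //; first by move=> [] [].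
  move=> i [] ys; rewrite /RU.
  have := Hr i j ys; rewrite /RT /= HsP => ->; by [].
have [tO [tP [Htauto HtO HtP]]] := Hhom _ _ _ _ _ _ _ (embU j) emb2.
have H1 := proj2 (psat_auto Htauto (phi j) (upd (a' j) 0 (x j)) (fun _ => b' j)) (Hx j).
apply: (proj1 (psat_agree _ _) H1).
- move=> u hu /=; rewrite /upd; case: eqP => [_|/eqP hu0].
    by have := HtO None.
  have hin : (a' j u : eT) \in F.
    rewrite mem_cat; apply/orP; right; apply/flattenP.
    exists [seq (a' j v : eT) | v <- [seq v <- fvO (phi j) | v != 0]].
      by apply/mapP; exists j; rewrite ?mem_enum.
    by apply/mapP; exists u; rewrite // mem_filter hu0.
  have [i0 <-] := memF _ hin.
  by have := HtO (Some i0); rewrite /= HsO.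
- by move=> w _ /=; apply: (HtP tt).
Qed.
End M0.

Definition rO (n j v : nat) := (v * n + j).*2.
Definition rO' (n j v : nat) := if v == 0 then 1 else rO n j v.
Definition rP (n j w : nat) := w * n + j.
Definition cv (i : nat) := (i.*2).+3.

Lemma rO_inj n j : 0 < n -> injective (rO n j).
Proof.
move=> hn v v' /double_inj /addIn /eqP; rewrite eqn_pmul2r // => /eqP //.
Qed.

Lemma rP_inj n j : 0 < n -> injective (rP n j).
Proof.
move=> hn v v' /addIn /eqP; rewrite eqn_pmul2r // => /eqP //.
Qed.

Lemma rO_neq1 n j v : rO n j v != 1.
Proof. by apply/eqP => /(congr1 odd); rewrite /rO odd_double. Qed.

Lemma cv_neq1 i : cv i != 1.
Proof. by []. Qed.

Lemma rO'_inj n j : 0 < n -> injective (rO' n j).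
Proof.
move=> hn v v'; rewrite /rO'.
case: (v =P 0) => [->|h1]; case: (v' =P 0) => [->|h2] //.
- by move=> E; have := rO_neq1 n j v'; rewrite -E.
- by move=> E; have := rO_neq1 n j v; rewrite E.
- exact: rO_inj.
Qed.

Lemma upd_rO' (T : Type) (e : nat -> T) n j x :
  (upd e 1 x) \o rO' n j = upd (e \o rO n j) 0 x.
Proof.
apply: functional_extensionality => v; rewrite /upd /rO' /=.
by case: (v =P 0) => _ //=; rewrite (negbTE (rO_neq1 n j v)).
Qed.

Lemma upd_upd (T : Type) (e : nat -> T) v x y : upd (upd e v y) v x = upd e v x.
Proof. by apply: functional_extensionality => u; rewrite /upd; case: eqP. Qed.

Lemma In_flatten (T : Type) (U : eqType) (f : U -> seq T) (l : seq U) u x :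
  u \in l -> List.In x (f u) -> List.In x (flatten (map f l)).
Proof.
elim: l => [//|u' l IH]; rewrite inE => /orP [/eqP<-|hu] hx /=;
  apply: List.in_or_app; [by left | by right; apply: IH].
Qed.

Lemma In_map (T : Type) (U : eqType) (f : U -> T) (l : seq U) u :
  u \in l -> List.In (f u) (map f l).
Proof.
elim: l => [//|u' l IH]; rewrite inE => /orP [/eqP<-|hu] /=; [by left | by right; apply: IH].
Qed.

Lemma nth_In (T : Type) (d : T) s i : i < size s -> List.In (nth d s i) s.
Proof. elim: s i => [//|x s IH] [|i] /= hi; [by left | by right; apply: IH]. Qed.

Lemma In_nth (T : Type) (d : T) s x : List.In x s -> exists2 i, i < size s & nth d s i = x.
Proof.
elim: s => [//|y s IH] /= [->|/IH [i hi <-]]; first by exists 0.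
by exists i.+1.
Qed.

Section Main.
Variables (k : nat) (ar : 'I_k -> nat) (n : nat) (phi : 'I_n -> pform ar) (m : nat).

Definition Gj (j : 'I_n) : pform ar :=
  PAnd (rename (rO n j) (rP n j) (phi j))
  (PAnd (bigand (fun w => PEqP ar (rP n j w) (rP n j 0)) (fvP (phi j)))
  (PAnd (bigand (fun l : 'I_n => bigand (fun v => PNot (PEqO ar (rO n j 0) (rO n l v)))
                   [seq v <- fvO (phi l) | v != 0]) (enum 'I_n))
  (PAnd (bigand (fun i => PNot (PEqO ar (rO n j 0) (cv i))) (iota 0 m))
        (bigand (fun l : 'I_n => PNot (PEqP ar (rP n j 0) (rP n l 0)))
                [seq l <- enum 'I_n | l != j])))).

Definition Gu : pform ar :=
  PNot (PExO 1 (PAnd (bigand (fun j : 'I_n => rename (rO' n j) (rP n j) (phi j)) (enum 'I_n))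
                     (bigand (fun i => PNot (PEqO ar 1 (cv i))) (iota 0 m)))).

Definition G : pform ar := PAnd (bigand Gj (enum 'I_n)) Gu.
End Main.

Theorem lemma4p7 (k : nat) (ar : 'I_k -> nat) (K : Lclass ar)
  (HK : fraisse_class K) (HSAP : SAP K)
  (N : pfc_struct ar) (HN : model_of_Tpfc K N)
  (n : nat) (hn : 0 < n) (phi : 'I_n -> pform ar)
  (a : 'I_n -> nat -> sortO N) (b : 'I_n -> sortP N) (hb : injective b) :
  (forall j : 'I_n,
     infinite_pred (fun x : sortO N => psat (upd (a j) 0 x) (fun _ => b j) (phi j))) ->
  infinite_pred (fun x : sortO N =>
     forall j : 'I_n, psat (upd (a j) 0 x) (fun _ => b j) (phi j)).
Proof.
move=> H [s Hs].
case: HN => M0 [HM0 Heq].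
pose m := size s.
pose forb (x : sortO N) := List.In x s \/
   exists l v, [/\ v \in fvO (phi l), v != 0 & x = a l v].
have Hx : forall j, exists x, psat (upd (a j) 0 x) (fun _ => b j) (phi j) /\ ~ forb x.
  move=> j; apply: NNPP => Hn; apply: (H j).
  exists (s ++ flatten [seq [seq a l v | v <- [seq v <- fvO (phi l) | v != 0]] | l <- enum 'I_n]).
  move=> x Px.
  have : forb x by apply: NNPP => nf; apply: Hn; exists x.
  case=> [hs | [l [v [hv hv0 ->]]]]; apply: List.in_or_app; first by left.
  right; apply: (In_flatten (u := l)); first by rewrite mem_enum.
  by apply: In_map; rewrite mem_filter hv0.
pose xw j := proj1_sig (constructive_indefinite_description _ (Hx j)).
have Hxw : forall j, psat (upd (a j) 0 (xw j)) (fun _ => b j) (phi j) /\ ~ forb (xw j).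
  by move=> j; exact: (proj2_sig (constructive_indefinite_description _ (Hx j))).
pose ordn (w : nat) : 'I_n := Ordinal (ltn_pmod w hn).
pose d0 := xw (Ordinal hn).
pose EN (u : nat) : sortO N := if odd u then (if u == 1 then d0 else nth d0 s (u - 3)./2)
   else upd (a (ordn (u./2))) 0 (xw (ordn (u./2))) (u./2 %/ n).
pose EPN (w : nat) : sortP N := b (ordn w).
have ordnE : forall (j : 'I_n) v, ordn (v * n + j) = j.
  by move=> j v; apply: val_inj; rewrite /= modnMDl modn_small.
have EN_rO : forall (j : 'I_n) v, EN (rO n j v) = upd (a j) 0 (xw j) v.
  move=> j v; rewrite /EN /rO odd_double doubleK ordnE divnMDl // divn_small //.
  by rewrite addn0.
have EN_cv : forall i, EN (cv i) = nth d0 s i.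
  by move=> i; rewrite /EN /cv /= negbK odd_double /= -addn3 addnK doubleK.
have EPN_rP : forall (j : 'I_n) w, EPN (rP n j w) = b j.
  by move=> j w; rewrite /EPN /rP ordnE.
have ENo : forall j : 'I_n, EN \o rO n j = upd (a j) 0 (xw j).
  by move=> j; apply: functional_extensionality => v; apply: EN_rO.
have EPNo : forall j : 'I_n, EPN \o rP n j = (fun _ => b j).
  by move=> j; apply: functional_extensionality => v; apply: EPN_rP.
have GN : psat EN EPN (G phi m).
  rewrite /G /=; split.
    apply/psat_bigand => j _ /=; split; [|split; [|split; [|split]]].
    - apply/(psat_rename (@rO_inj n j hn) (@rP_inj n j hn)).
      by rewrite ENo EPNo; exact: (Hxw j).1.
    - by apply/psat_bigand => w _ /=; rewrite !EPN_rP.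
    - apply/psat_bigand => l _; apply/psat_bigand => v; rewrite mem_filter.
      move=> /andP [hv0 hv] /=; rewrite !EN_rO /upd eqxx (negbTE hv0) => E.
      by apply: (Hxw j).2; right; exists l, v.
    - apply/psat_bigand => i; rewrite mem_iota add0n => /andP [_ hi] /=.
      rewrite EN_rO EN_cv /upd eqxx => E.
      by apply: (Hxw j).2; left; rewrite E; apply: nth_In.
    - apply/psat_bigand => l; rewrite mem_filter => /andP [hlj _] /=.
      by rewrite !EPN_rP => /hb E; rewrite E eqxx in hlj.
  move=> [x [/psat_bigand Hc /psat_bigand Hnc]].
  have Cx : forall j : 'I_n, psat (upd (a j) 0 x) (fun _ => b j) (phi j).
    move=> j; have := Hc j (mem_enum _ j).
    move/(psat_rename (@rO'_inj n j hn) (@rP_inj n j hn)).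
    by rewrite upd_rO' ENo upd_upd EPNo.
  have [i hi Ei] := In_nth d0 (Hs x Cx).
  have := Hnc i; rewrite mem_iota add0n hi => /(_ isT) /=.
  by rewrite /upd eqxx (negbTE (cv_neq1 i)) EN_cv Ei.
have [E [EP GM]] : exists E EP, psat (M:=M0) E EP (G phi m).
  apply: NNPP => Hn.
  have A : forall eO eP, psat (M:=M0) eO eP (PNot (G phi m)).
    by move=> eO eP HG; apply: Hn; exists eO, eP.
  exact: (proj2 (Heq (PNot (G phi m))) A EN EPN GN).
move: GM; rewrite /G /= => [[/psat_bigand GA GU]].
pose a' (j : 'I_n) := E \o rO n j.
pose x (j : 'I_n) := E (rO n j 0).
pose b' (j : 'I_n) := EP (rP n j 0).
pose cs := mkseq (fun i => E (cv i)) m.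
have GA' : forall j : 'I_n, psat E EP (Gj phi m j) by move=> j; apply: GA; rewrite mem_enum.
have Pagree : forall j : 'I_n, {in fvP (phi j), EP \o rP n j =1 (fun _ => b' j)}.
  move=> j w hw; have [_ [/psat_bigand R2 _]] := GA' j.
  exact: (R2 w hw).
have hb' : injective b'.
  move=> j l E'; apply/eqP; apply: contraT => hne.
  have [_ [_ [_ [_ /psat_bigand R5]]]] := GA' j.
  have := R5 l; rewrite mem_filter mem_enum eq_sym hne => /(_ isT) NE; by case: (NE E').
have H1 : forall j, psat (upd (a' j) 0 (x j)) (fun _ => b' j) (phi j).
  move=> j; have [/(psat_rename (@rO_inj n j hn) (@rP_inj n j hn)) R1 _] := GA' j.
  apply: (proj1 (psat_agree _ _) R1); last exact: Pagree.
  by move=> u _; rewrite /upd /a' /x /=; case: eqP => [->|].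
have H2 : forall j i, i < size cs -> x j <> nth (x (Ordinal hn)) cs i.
  move=> j i; rewrite size_mkseq => hi; rewrite nth_mkseq //.
  have [_ [_ [_ [/psat_bigand R4 _]]]] := GA' j.
  by apply: R4; rewrite mem_iota add0n.
have H3 : forall j l v, v \in fvO (phi l) -> v != 0 -> x j <> a' l v.
  move=> j l v hv hv0.
  have [_ [_ [/psat_bigand R3 _]]] := GA' j.
  have /psat_bigand := R3 l (mem_enum _ l).
  by apply; rewrite mem_filter hv0.
have [y [Hy Hyc]] := ext_lemma HM0 hb' H1 H2 H3.
apply: GU; exists y; split.
  apply/psat_bigand => j _; apply/(psat_rename (@rO'_inj n j hn) (@rP_inj n j hn)).
  rewrite upd_rO'; apply: (proj2 (psat_agree _ _) (Hy j)) => //.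
apply/psat_bigand => i; rewrite mem_iota add0n => /andP [_ hi] /=.
rewrite /upd eqxx (negbTE (cv_neq1 i)).
have := Hyc i; rewrite size_mkseq => /(_ hi); rewrite nth_mkseq //.
Qed.
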